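(* Let $\Gamma$ be a finite simplicial graph with vertex set $V=\{a_0,\ldots,a_{n-1}\}$ ($n\ge1$), let $M$ be a positive integer, $B(M)=\{w\in A(\Gamma):\|w\|\le M\}$, and let $\sigma$ be defined on words as in the context. Then: (1) $\sigma$ gives a well-defined map $B(M)\to A(\Gamma)$; that is, if two words $s_1^{e_1}\cdots s_\ell^{e_\ell}$ and $t_1^{d_1}\cdots t_\ell^{d_\ell}$ of length $\ell=\|w\|$ represent the same element $w\in B(M)$, then their images under $\sigma$ are equal in $A(\Gamma)$. (2) If $s_1^{e_1}\cdots s_\ell^{e_\ell}$ is a canonical expression for $w\in B(M)$ and $\sigma(w)=s_1^{N_1}\cdots s_\ell^{N_\ell}$ as in the context, then $(s_1^{N_1},\ldots,s_\ell^{N_\ell})$ is a subsequence of the sequence $(u_i)_{i\ge0}$, i.e. there are indices $j_1<j_2<\cdots<j_\ell$ with $s_k^{N_k}=u_{j_k}$ for all $k$.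
   Context: $A(\Gamma)=\langle V\mid[a,b]=1\text{ for }\{a,b\}\in E(\Gamma)\rangle$; $\|w\|$ is the word length with respect to $V$. For a word $s_1^{e_1}\cdots s_\ell^{e_\ell}$ ($s_i\in V$, $e_i\in\{\pm1\}$, $\ell=\|w\|$) representing $w$, its right-counting vector $(f_1,\ldots,f_\ell)$ has $f_i=\min\|y\|$ over $y\in A(\Gamma)$ such that $s_i^{e_i}\cdots s_\ell^{e_\ell}=x\,s_i^{e_i}\,y$ for some $x\in\langle\mathrm{lk}_\Gamma(s_i)\rangle$ ($\mathrm{lk}_\Gamma(s)$ = vertices adjacent to $s$). The word is a canonical expression if (A) $f_1\ge\cdots\ge f_\ell$ and (B) whenever $f_i=f_j$, $i<j$, $s_i=a_p$, $s_j=a_q$, then $p<q$ and $[a_p,a_q]=1$. Define $N_i=\frac{3e_i-1}{2}\cdot 4^{M-1-f_i}$ and $\sigma(s_1^{e_1}\cdots s_\ell^{e_\ell})=s_1^{N_1}s_2^{N_2}\cdots s_\ell^{N_\ell}\in A(\Gamma)$. The sequence $(u_i)$: for $i\ge0$, $0\le j<2n$, $u_{2ni+j}=a_{\lfloor j/2\rfloor}^{\,r_{i,j}}$ with $r_{i,j}=(-2)^{2i+j-2\lfloor j/2\rfloor}$ (so $u_0=a_0,u_1=a_0^{-2},u_2=a_1,u_3=a_1^{-2},\ldots,u_{2n}=a_0^4,u_{2n+1}=a_0^{-8},\ldots$). *)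

(* Defs.v *)
From mathcomp Require Import all_boot all_order all_algebra.
Set Implicit Arguments. Unset Strict Implicit. Unset Printing Implicit Defensive.
Import GRing.Theory Num.Theory.

(* A letter s^e : vertex s, sign e (true = +1, false = -1). *)
Definition letter (n : nat) := ('I_n * bool)%type.
Definition word (n : nat) := seq (letter n).
Definition linv n (x : letter n) : letter n := (x.1, ~~ x.2).

(* Equality in A(Gamma) = <V | [a,b]=1, {a,b} in E(Gamma)>: the congruence on
   words generated by free cancellation and commutation of adjacent generators. *)
Inductive raag_eq (n : nat) (e : rel 'I_n) : word n -> word n -> Prop :=
| re_refl s : raag_eq e s s
| re_sym s t : raag_eq e s t -> raag_eq e t s
| re_trans s t r : raag_eq e s t -> raag_eq e t r -> raag_eq e s r
| re_free u w x : raag_eq e (u ++ x :: linv x :: w) (u ++ w)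
| re_comm u w x y : e x.1 y.1 -> raag_eq e (u ++ x :: y :: w) (u ++ y :: x :: w).

Definition geodesic n (e : rel 'I_n) (s : word n) : Prop :=
  forall t, raag_eq e s t -> (size s <= size t)%N.

Definition is_min (P : nat -> Prop) (m : nat) : Prop :=
  P m /\ forall k, P k -> (m <= k)%N.

(* The set over which f_i (0-indexed i) is minimised: possible values ||y||,
   i.e. lengths of words y with  s_i^{e_i}...s_l^{e_l} = x s_i^{e_i} y,
   x in <lk(s_i)> (x a word in letters from lk(s_i)). *)
Definition rc_cand n (e : rel 'I_n) (s : word n) (i : nat) (x0 : letter n)
  (k : nat) : Prop :=
  exists (x y : word n),
    all (fun l : letter n => e (nth x0 s i).1 l.1) x /\ size y = k /\
    raag_eq e (drop i s) (x ++ nth x0 s i :: y).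

Definition rcv n (e : rel 'I_n) (s : word n) (f : seq nat) : Prop :=
  size f = size s /\
  forall x0 i, (i < size s)%N -> is_min (rc_cand e s i x0) (nth 0%N f i).

Definition commutator_trivial n (e : rel 'I_n) (a b : 'I_n) : Prop :=
  raag_eq e [:: (a, true); (b, true); (a, false); (b, false)] [::].

Definition canonical n (e : rel 'I_n) (s : word n) (f : seq nat) : Prop :=
  rcv e s f /\
  (forall i j, (i <= j < size s)%N -> (nth 0%N f j <= nth 0%N f i)%N) /\
  (forall x0 i j, (i < j < size s)%N -> nth 0%N f i = nth 0%N f j ->
     ((nth x0 s i).1 < (nth x0 s j).1)%N /\
     commutator_trivial e (nth x0 s i).1 (nth x0 s j).1).

(* N_k = ((3 e_k - 1)/2) * 4^(M-1-f_k)  (e_k = +1 -> 4^.., e_k = -1 -> -2*4^..) *)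
Definition Nexp (M : nat) (b : bool) (fk : nat) : int :=
  ((if b then 1 else -2) * (4 ^+ (M - 1 - fk)%N))%R.

(* the sequence of syllables (s_k, N_k), vertices as their index p of a_p *)
Definition sylls n (M : nat) (s : word n) (f : seq nat) : seq (nat * int) :=
  [seq (nat_of_ord p.1.1, Nexp M p.1.2 p.2) | p <- zip s f].

Definition pw n (a : 'I_n) (z : int) : word n := nseq `|z|%N (a, (0 <= z)%R).

Definition sigma n (M : nat) (s : word n) (f : seq nat) : word n :=
  flatten [seq pw p.1.1 (Nexp M p.1.2 p.2) | p <- zip s f].

(* u_{2ni+j} = a_{floor(j/2)}^{(-2)^(2i+j-2 floor(j/2))}, 0 <= j < 2n;
   returned as (index of the vertex, exponent) *)
Definition u (n : nat) (m : nat) : nat * int :=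
  let i := (m %/ (2 * n))%N in
  let j := (m %% (2 * n))%N in
  (j %/ 2, ((-2) ^+ (2 * i + j - 2 * (j %/ 2)))%R)%N.

(* Main.v *)
Require Import Defs.
From mathcomp Require Import all_boot all_order all_algebra.
From mathcomp Require Import zify.
From Stdlib Require Import Classical.
Set Implicit Arguments. Unset Strict Implicit. Unset Printing Implicit Defensive.

Fixpoint absorb n (e : rel 'I_n) (x : letter n) (s : word n) : option (word n) :=
  match s with
  | [::] => None
  | y :: s' => if y == linv x then Some s'
               else if e x.1 y.1 then omap (cons y) (absorb e x s') else None
  end.

Definition act n (e : rel 'I_n) (x : letter n) (s : word n) : word n :=
  if absorb e x s is Some r then r else x :: s.

Fixpoint reduced n (e : rel 'I_n) (s : word n) : bool :=
  match s with
  | [::] => true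
  | y :: s' => (absorb e y s' == None) && reduced e s'
  end.

Definition nf n (e : rel 'I_n) (w : word n) : word n := foldr (act e) [::] w.

Inductive sheq n (e : rel 'I_n) : word n -> word n -> Prop :=
| sh_refl s : sheq e s s
| sh_sym s t : sheq e s t -> sheq e t s
| sh_trans s t r : sheq e s t -> sheq e t r -> sheq e s r
| sh_swap p q a b : e a.1 b.1 -> sheq e (p ++ a :: b :: q) (p ++ b :: a :: q).

Lemma linvK n (x : letter n) : linv (linv x) = x.
Proof. by case: x => a b; rewrite /linv /= negbK. Qed.

Lemma absorb_cat n (e : rel 'I_n) (irr : irreflexive e) x p q :
  all (fun l : letter n => e x.1 l.1) p ->
  absorb e x (p ++ q) = omap (cat p) (absorb e x q).
Proof.
elim: p => [|l p IH] /=; first by case: (absorb e x q).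
move=> /andP[exl allp].
have -> : (l == linv x) = false.
  apply/negbTE/eqP => lx; move: exl; by rewrite lx /= irr.
rewrite exl IH //; by case: (absorb e x q).
Qed.

Lemma absorb_found n (e : rel 'I_n) (irr : irreflexive e) x p q :
  all (fun l : letter n => e x.1 l.1) p ->
  absorb e x (p ++ linv x :: q) = Some (p ++ q).
Proof. by move=> H; rewrite absorb_cat //= eqxx. Qed.

Lemma absorb_some n (e : rel 'I_n) x (s r : word n) :
  absorb e x s = Some r -> exists p q, s = p ++ linv x :: q /\
    all (fun l : letter n => e x.1 l.1) p /\ r = p ++ q.
Proof.
elim: s r => [|y s IH] r //=.
case: eqP => [-> [<-]|_]; first by exists [::], s.
case exy: (e x.1 y.1) => //.
case H: (absorb e x s) => [r'|] //= [<-].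
have [p [q [-> [ap ->]]]] := IH _ H.
by exists (y :: p), q; rewrite /= exy ap.
Qed.

Lemma absorb_skip n (e : rel 'I_n) (irr : irreflexive e) y z p q :
  e y.1 z.1 ->
  (absorb e y (p ++ z :: q) == None) = (absorb e y (p ++ q) == None).
Proof.
move=> eyz; elim: p => [|l p IH] /=.
  have -> : (z == linv y) = false.
    apply/negbTE/eqP => zy; move: eyz; by rewrite zy /= irr.
  by rewrite eyz; case: (absorb e y q).
case: (l == linv y) => //; case: (e y.1 l.1) => //.
by move: IH; case: (absorb e y (p ++ z :: q)); case: (absorb e y (p ++ q)).
Qed.

Lemma reducedP n (e : rel 'I_n) (s : word n) :
  reduced e s <-> forall p y q, s = p ++ y :: q -> absorb e y q = None.
Proof.
elim: s => [|y s IH] /=.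
  by split => // _ [|? ?] ? ? //.
split.
  move=> /andP[/eqP H /IH H2] [|l p] y' q /= [E1 E2]; subst => //.
  exact: H2.
move=> H; apply/andP; split.
  by apply/eqP; apply: (H [::]).
by apply/IH => p y' q E; apply: (H (y :: p)); rewrite E.
Qed.

Lemma cat_split T (p q p' q' : seq T) (y : T) :
  p ++ q = p' ++ y :: q' ->
  (exists m, p = p' ++ y :: m /\ q' = m ++ q) \/
  (exists m, p' = p ++ m /\ q = m ++ y :: q').
Proof.
elim: p p' => [|a p IH] p' /=.
  by move=> ->; right; exists p'.
case: p' => [|b p'] /= [<-] E.
  by left; exists p; rewrite E.
case: (IH _ E) => [[m [-> ->]]|[m [-> ->]]].
  by left; exists m.
by right; exists m.
Qed.

Lemma sheq_catl n (e : rel 'I_n) u (s t : word n) :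
  sheq e s t -> sheq e (u ++ s) (u ++ t).
Proof.
elim=> [s'|s' t' _ IH|s' t' r _ IH1 _ IH2|p q a b eab].
- exact: sh_refl.
- exact: sh_sym.
- exact: sh_trans IH2.
- by rewrite !catA; apply: sh_swap.
Qed.

Lemma sheq_cons n (e : rel 'I_n) c (s t : word n) :
  sheq e s t -> sheq e (c :: s) (c :: t).
Proof. exact: (sheq_catl [:: c]). Qed.

Lemma sheq_shift n (e : rel 'I_n) (y : letter n) m z :
  all (fun l : letter n => e y.1 l.1) m -> sheq e (y :: m ++ z) (m ++ y :: z).
Proof.
elim: m => [|l m IH] /=; first by move=> _; apply: sh_refl.
move=> /andP[eyl am].
apply: (sh_trans (t := l :: y :: m ++ z)).
  exact: (sh_swap [::]).
exact/sheq_cons/IH.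
Qed.

Definition orel n (e : rel 'I_n) (o1 o2 : option (word n)) : Prop :=
  match o1, o2 with
  | None, None => True
  | Some r1, Some r2 => sheq e r1 r2
  | _, _ => False
  end.

Lemma absorb_swap n (e : rel 'I_n) (irr : irreflexive e) (sym : symmetric e)
  x p q (a b : letter n) :
  e a.1 b.1 ->
  orel e (absorb e x (p ++ a :: b :: q)) (absorb e x (p ++ b :: a :: q)).
Proof.
move=> eab; elim: p => [|y p IH] /=.
  case: (eqVneq a (linv x)) => [Ea|Ha].
    subst a.
    have -> : (b == linv x) = false.
      apply/negbTE/eqP => Eb; move: eab; by rewrite Eb /= irr.
    move: eab => /= ->; exact: sh_refl.
  case: (eqVneq b (linv x)) => [Eb|Hb].
    subst b; move: eab => /= eab.
    rewrite sym eab /=; exact: sh_refl.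
  case: (e x.1 a.1); case: (e x.1 b.1); case: (absorb e x q) => //= r.
  exact: (sh_swap [::]).
case: (y == linv x) => /=; first exact: sh_swap.
case: (e x.1 y.1) => //.
move: IH; case: (absorb e x (p ++ a :: b :: q)); case: (absorb e x (p ++ b :: a :: q)) => //= r1 r2 H.
exact: sheq_cons.
Qed.

Lemma act_sheq n (e : rel 'I_n) (irr : irreflexive e) (sym : symmetric e) x (s t : word n) :
  sheq e s t -> sheq e (act e x s) (act e x t).
Proof.
elim=> [s'|s' t' _ IH|s' t' r _ IH1 _ IH2|p q a b eab].
- exact: sh_refl.
- exact: sh_sym.
- exact: sh_trans IH2.
- rewrite /act; have := absorb_swap irr sym x p q eab.
  case: (absorb e x (p ++ a :: b :: q)); case: (absorb e x (p ++ b :: a :: q)) => //= _.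
  rewrite -!cat_cons; exact: sh_swap.
Qed.

Lemma foldr_sheq n (e : rel 'I_n) (irr : irreflexive e) (sym : symmetric e) u (s t : word n) :
  sheq e s t -> sheq e (foldr (act e) s u) (foldr (act e) t u).
Proof. by elim: u => //= x u IH H; apply: act_sheq => //; apply: IH. Qed.

Lemma act_reduced n (e : rel 'I_n) (irr : irreflexive e) (sym : symmetric e) x (s : word n) :
  reduced e s -> reduced e (act e x s).
Proof.
rewrite /act; case H: (absorb e x s) => [r|] Hs; last by rewrite /= H eqxx.
have [p [q [Es [ap Er]]]] := absorb_some H; subst s r.
move/reducedP: Hs => Hs; apply/reducedP => p' y q' E.
case: (cat_split E) => [[m [Ep Eq]]|[m [Ep Eq]]].
- subst p q'.
  have := Hs p' y (m ++ linv x :: q); rewrite -catA /= => /(_ erefl) /eqP.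
  have eyx : e y.1 (linv x).1.
    by move: ap; rewrite all_cat /= => /and3P[_ + _]; rewrite sym.
  by rewrite absorb_skip // => /eqP.
- subst p' q.
  by apply: (Hs (p ++ linv x :: m)); rewrite -catA.
Qed.

Lemma nf_reduced n (e : rel 'I_n) (irr : irreflexive e) (sym : symmetric e) (w : word n) :
  reduced e (nf e w).
Proof. by elim: w => //= x w IH; apply: act_reduced. Qed.

Lemma nf_id n (e : rel 'I_n) (s : word n) : reduced e s -> nf e s = s.
Proof.
elim: s => //= y s IH /andP[/eqP H Hs].
by rewrite /nf /= -/(nf e s) IH // /act H.
Qed.

Lemma act_inv n (e : rel 'I_n) (irr : irreflexive e) x (s : word n) :
  reduced e s -> sheq e (act e x (act e (linv x) s)) s.
Proof.
move=> Hs; rewrite {2}/act; case H: (absorb e (linv x) s) => [r|].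
  have [p [q [Es [ap Er]]]] := absorb_some H; subst s r.
  rewrite linvK in Hs *.
  have ap' : all (fun l : letter n => e x.1 l.1) p by [].
  rewrite /act absorb_cat //.
  move/reducedP: Hs => /(_ p x q erefl) ->.
  exact: sheq_shift.
by rewrite /act /= eqxx; apply: sh_refl.
Qed.

Lemma cat_split2 T (p1 q1 p2 q2 : seq T) (a b : T) :
  p1 ++ a :: q1 = p2 ++ b :: q2 -> a <> b ->
  (exists m, p2 = p1 ++ a :: m /\ q1 = m ++ b :: q2) \/
  (exists m, p1 = p2 ++ b :: m /\ q2 = m ++ a :: q1).
Proof.
move=> E ab; case: (cat_split E) => [[m [-> ->]]|[[|c m] [-> E2]]].
- by right; exists m.
- by move: E2 => /= [E3 _]; case: ab.
- by move: E2 => /= [-> ->]; left; exists m.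
Qed.

Lemma act_comm n (e : rel 'I_n) (irr : irreflexive e) (sym : symmetric e) x y (s : word n) :
  e x.1 y.1 -> sheq e (act e x (act e y s)) (act e y (act e x s)).
Proof.
move=> exy.
have eyx : e y.1 x.1 by rewrite sym.
have cons_x : forall w, absorb e x (y :: w) = omap (cons y) (absorb e x w).
  by move=> w; rewrite (absorb_cat irr (p := [:: y])) /= ?exy.
have cons_y : forall w, absorb e y (x :: w) = omap (cons x) (absorb e y w).
  by move=> w; rewrite (absorb_cat irr (p := [:: x])) /= ?eyx.
case Hx: (absorb e x s) => [r1|]; case Hy: (absorb e y s) => [r2|].
- have [p1 [q1 [Es1 [ap1 Er1]]]] := absorb_some Hx.
  have [p2 [q2 [Es2 [ap2 Er2]]]] := absorb_some Hy.
  subst r1 r2; rewrite /act Hx Hy.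
  have Hne : linv x <> linv y.
    move=> E; move: exy; by rewrite -[x]linvK E /= irr.
  rewrite Es1 in Es2.
  case: (cat_split2 Es2 Hne) => [[m [Ep Eq]]|[m [Ep Eq]]].
  + subst p2 q1.
    move: ap2; rewrite all_cat /= => /and3P[a1 _ am].
    rewrite -catA /= (@absorb_found _ _ irr x p1 (m ++ q2) ap1).
    have apm : all (fun l : letter n => e y.1 l.1) (p1 ++ m) by rewrite all_cat a1 am.
    rewrite [p1 ++ m ++ linv y :: q2]catA (@absorb_found _ _ irr y (p1 ++ m) q2 apm) -catA.
    exact: sh_refl.
  + subst p1 q2.
    move: ap1; rewrite all_cat /= => /and3P[a1 _ am].
    have apm : all (fun l : letter n => e x.1 l.1) (p2 ++ m) by rewrite all_cat a1 am.
    rewrite catA (@absorb_found _ _ irr x (p2 ++ m) q1 apm) -catA /=.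
    rewrite -catA /= (@absorb_found _ _ irr y p2 (m ++ q1) ap2).
    exact: sh_refl.
- have [p1 [q1 [Es1 [ap1 Er1]]]] := absorb_some Hx.
  subst r1 s; rewrite /act Hx Hy cons_x Hx /=.
  have : absorb e y (p1 ++ linv x :: q1) == None by rewrite Hy.
  rewrite absorb_skip // => /eqP ->; exact: sh_refl.
- have [p2 [q2 [Es2 [ap2 Er2]]]] := absorb_some Hy.
  subst r2 s; rewrite /act Hx Hy cons_y Hy /=.
  have : absorb e x (p2 ++ linv y :: q2) == None by rewrite Hx.
  rewrite absorb_skip // => /eqP ->; exact: sh_refl.
- rewrite /act Hx Hy cons_x cons_y Hx Hy /=.
  exact: (sh_swap [::]).
Qed.

Lemma sheq_raag n (e : rel 'I_n) (s t : word n) : sheq e s t -> raag_eq e s t.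
Proof.
elim=> [s'|s' t' _ IH|s' t' r _ IH1 _ IH2|p q a b eab].
- exact: re_refl.
- exact: re_sym.
- exact: re_trans IH2.
- exact: re_comm.
Qed.

Lemma raag_catl n (e : rel 'I_n) u (s t : word n) :
  raag_eq e s t -> raag_eq e (u ++ s) (u ++ t).
Proof.
elim=> [s'|s' t' _ IH|s' t' r _ IH1 _ IH2|p q a|p q a b eab].
- exact: re_refl.
- exact: re_sym.
- exact: re_trans IH2.
- by rewrite !catA; apply: re_free.
- by rewrite !catA; apply: re_comm.
Qed.

Lemma raag_nf n (e : rel 'I_n) (irr : irreflexive e) (sym : symmetric e) (s t : word n) :
  raag_eq e s t -> sheq e (nf e s) (nf e t).
Proof.
elim=> [s'|s' t' _ IH|s' t' r _ IH1 _ IH2|p q a|p q a b eab].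
- exact: sh_refl.
- exact: sh_sym.
- exact: sh_trans IH2.
- rewrite /nf !foldr_cat /=; apply: foldr_sheq => //.
  exact/act_inv/nf_reduced.
- rewrite /nf !foldr_cat /=; apply: foldr_sheq => //.
  exact: act_comm.
Qed.

Lemma geodesic_reduced n (e : rel 'I_n) (s : word n) :
  geodesic e s -> reduced e s.
Proof.
move=> G; apply/reducedP => p y q Es.
case H: (absorb e y q) => [r|] //.
have [m [k [Eq [am _]]]] := absorb_some H; subst q s.
have R : raag_eq e (p ++ y :: m ++ linv y :: k) (p ++ m ++ k).
  apply: (@re_trans _ _ _ ((p ++ m) ++ y :: linv y :: k)).
    rewrite -catA; apply/raag_catl/sheq_raag/sheq_shift => //.
  rewrite [p ++ m ++ k]catA; exact: re_free.
have := G _ R; rewrite !size_cat /= size_cat /=; lia.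
Qed.

Lemma shuffle n (e : rel 'I_n) (irr : irreflexive e) (sym : symmetric e) (s t : word n) :
  geodesic e s -> geodesic e t -> raag_eq e s t -> sheq e s t.
Proof.
move=> Gs Gt R.
rewrite -(nf_id (geodesic_reduced Gs)) -(nf_id (geodesic_reduced Gt)).
exact: raag_nf.
Qed.

Lemma min_exists (P : nat -> Prop) k : P k -> exists m, is_min P m.
Proof.
elim: k {-2}k (leqnn k) => [|N IH] k Hk Pk.
  have k0 : k = 0 by lia.
  subst k; exists 0; split => // j _; lia.
case: (classic (exists j, j < k /\ P j)) => [[j [jk Pj]]|H].
  apply: (IH j) => //; lia.
exists k; split => // j Pj; case: (leqP k j) => // jk.
by case: H; exists j.
Qed.

Lemma is_min_eq (P Q : nat -> Prop) m m' :
  (forall k, P k <-> Q k) -> is_min P m -> is_min Q m' -> m = m'.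
Proof.
move=> PQ [Pm Hm] [Qm Hm'].
apply/eqP; rewrite eqn_leq Hm ?Hm' //; [exact/PQ | exact/PQ].
Qed.

Lemma seq_choice (Q : nat -> nat -> Prop) N :
  (forall i, i < N -> exists m, Q i m) ->
  exists f : seq nat, size f = N /\ forall i, i < N -> Q i (nth 0 f i).
Proof.
elim: N => [|N IH] H; first by exists [::].
have [f [sf Hf]] := IH (fun i iN => H i (ltnW iN)).
have [m Hm] := H N (ltnSn N).
exists (rcons f m); split; first by rewrite size_rcons sf.
move=> i; rewrite ltnS leq_eqVlt => /orP[/eqP ->|iN].
  by rewrite nth_rcons sf ltnn eqxx.
by rewrite nth_rcons sf iN; apply: Hf.
Qed.

Lemma rcv_exists n (e : rel 'I_n) (s : word n) : exists f, rcv e s f.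
Proof.
have [f [sf Hf]] : exists f : seq nat, size f = size s /\
   forall i, i < size s -> forall x0, is_min (rc_cand e s i x0) (nth 0 f i).
  apply: (@seq_choice (fun i m => forall x0, is_min (rc_cand e s i x0) m)) => i Hi.
  case: s Hi => [|d s'] // Hi.
  have [m Hm] : exists m, is_min (rc_cand e (d :: s') i d) m.
    apply: (@min_exists _ (size (drop i.+1 (d :: s')))).
    exists [::], (drop i.+1 (d :: s')); split => //; split => //.
    rewrite (drop_nth d Hi); exact: re_refl.
  exists m => x0.
  by rewrite /rc_cand (set_nth_default d x0 Hi).
by exists f; split => // x0 i Hi; apply: Hf.
Qed.

Lemma rcv_bound n (e : rel 'I_n) (s : word n) f (x0 : letter n) i :
  rcv e s f -> i < size s -> nth 0 f i <= size s - i.+1.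
Proof.
move=> [_ H] Hi; have [_ Hm] := H x0 i Hi.
rewrite -size_drop; apply: Hm.
exists [::], (drop i.+1 s); split => //; split => //.
rewrite (drop_nth x0 Hi); exact: re_refl.
Qed.

Definition cand n (e : rel 'I_n) (d : letter n) (w : word n) (c : nat) : Prop :=
  exists x y, all (fun l : letter n => e d.1 l.1) x /\ size y = c /\
    raag_eq e w (x ++ d :: y).

Lemma cand_raag n (e : rel 'I_n) d (w w' : word n) c :
  raag_eq e w w' -> cand e d w c -> cand e d w' c.
Proof.
move=> R [x [y [a [sy R2]]]]; exists x, y; split => //; split => //.
exact: re_trans (re_sym R) R2.
Qed.

Lemma raag_cons n (e : rel 'I_n) c (s t : word n) :
  raag_eq e s t -> raag_eq e (c :: s) (c :: t).
Proof. exact: (raag_catl [:: c]). Qed.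

Lemma swap_cand n (e : rel 'I_n) (sym : symmetric e) (d c : letter n) q k :
  e d.1 c.1 -> (cand e d (d :: c :: q) k <-> cand e d (d :: q) k).
Proof.
move=> edc; split.
  move=> [x [y [a [sy R]]]]; exists (linv c :: x), y; split; first by rewrite /= edc.
  split => //.
  apply: (@re_trans _ _ _ (linv c :: d :: c :: q)).
    apply: (@re_trans _ _ _ (linv c :: c :: d :: q)).
      apply: re_sym; have := @re_free _ e [::] (d :: q) (linv c).
      by rewrite linvK.
    apply: raag_cons; apply: (@re_comm _ _ [::]); by rewrite /= sym.
  exact: raag_cons.
move=> [x [y [a [sy R]]]]; exists (c :: x), y; split; first by rewrite /= edc.
split => //.
apply: (@re_trans _ _ _ (c :: d :: q)).
  apply: (@re_comm _ _ [::]) => //.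
exact: raag_cons.
Qed.

Lemma rc_candE n (e : rel 'I_n) (s : word n) i x0 c :
  rc_cand e s i x0 c <-> cand e (nth x0 s i) (drop i s) c.
Proof. by []. Qed.

Definition sw (k i : nat) := if i == k then k.+1 else if i == k.+1 then k else i.

Lemma swap_key n (e : rel 'I_n) (sym : symmetric e) (p q : word n) a b x0 i c :
  e a.1 b.1 -> i < size (p ++ a :: b :: q) ->
  (rc_cand e (p ++ b :: a :: q) i x0 c <-> rc_cand e (p ++ a :: b :: q) (sw (size p) i) x0 c).
Proof.
move=> eab Hi; rewrite !rc_candE /sw.
case: (ltnP i (size p)) => ip.
  have -> : (i == size p) = false by apply/negbTE; rewrite neq_ltn ip.
  have -> : (i == (size p).+1) = false by apply/negbTE; rewrite neq_ltn ltnS ltnW.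
  rewrite !nth_cat !drop_cat ip.
  by split; apply: cand_raag; apply: re_comm; rewrite // sym.
case: (eqVneq i (size p)) => [->|ne1].
  rewrite !nth_cat !drop_cat ltnn subnn /=.
  have -> : (size p).+1 < size p = false by rewrite ltnNge leqnSn.
  rewrite subSnn /=.
  by apply: swap_cand => //; rewrite sym.
case: (eqVneq i (size p).+1) => [->|ne2].
  rewrite !nth_cat !drop_cat ltnn subnn /=.
  have -> : (size p).+1 < size p = false by rewrite ltnNge leqnSn.
  rewrite subSnn /=.
  by apply: iff_sym; apply: swap_cand.
have ip2 : (size p).+1 < i by lia.
have [j Hj] : exists j, i - size p = j.+2 by exists (i - size p - 2); lia.
rewrite !nth_cat !drop_cat.
have -> : i < size p = false by apply/negbTE; rewrite -leqNgt.
by rewrite Hj.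
Qed.

Lemma split4 T (f : seq T) k m :
  size f = k + m.+2 -> exists fp fa fb fq, f = fp ++ fa :: fb :: fq /\
    size fp = k /\ size fq = m.
Proof.
move=> sf; have := cat_take_drop k f.
have sd : size (drop k f) = m.+2 by rewrite size_drop sf; lia.
case E: (drop k f) sd => [|fa [|fb fq]] //= [sq] Ef.
exists (take k f), fa, fb, fq; split => //; split => //.
by rewrite size_take sf; case: ifP => //; lia.
Qed.

Lemma nth_sw T (x0 : T) fp fa fb fq i :
  nth x0 (fp ++ fa :: fb :: fq) (sw (size fp) i) = nth x0 (fp ++ fb :: fa :: fq) i.
Proof.
rewrite /sw !nth_cat.
case: (eqVneq i (size fp)) => [->|ne1].
  rewrite ltnn subnn /=.
  have -> : (size fp).+1 < size fp = false by rewrite ltnNge leqnSn.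
  by rewrite subSnn.
case: (eqVneq i (size fp).+1) => [->|ne2].
  rewrite ltnn subnn /=.
  have -> : (size fp).+1 < size fp = false by rewrite ltnNge leqnSn.
  by rewrite subSnn.
case: (ltnP i (size fp)) => // ip.
have [j Hj] : exists j, i - size fp = j.+2 by exists (i - size fp - 2); lia.
by rewrite Hj.
Qed.

Lemma sigma_cat n M (p q : word n) fp fq :
  size p = size fp -> sigma M (p ++ q) (fp ++ fq) = sigma M p fp ++ sigma M q fq.
Proof. by move=> H; rewrite /sigma zip_cat // map_cat flatten_cat. Qed.

Lemma sigma_cons n M (a : letter n) q f fq :
  sigma M (a :: q) (f :: fq) = pw a.1 (Nexp M a.2 f) ++ sigma M q fq.
Proof. by []. Qed.

Lemma blocks n (e : rel 'I_n) (A B Y : word n) :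
  (forall l, l \in A -> all (fun l' : letter n => e l.1 l'.1) B) ->
  sheq e (A ++ B ++ Y) (B ++ A ++ Y).
Proof.
elim: A => [|l A IH] H /=; first exact: sh_refl.
apply: (@sh_trans _ _ _ (l :: B ++ A ++ Y)).
  apply: sheq_cons; apply: IH => l' Hl'; apply: H; by rewrite inE Hl' orbT.
exact/sheq_shift/H/mem_head.
Qed.

Lemma mem_pw n (a : 'I_n) z l : l \in pw a z -> l.1 = a.
Proof. by rewrite /pw mem_nseq => /andP[_ /eqP ->]. Qed.

Lemma sigma_swap n (e : rel 'I_n) (irr : irreflexive e) (sym : symmetric e) M
  (p q : word n) a b fs ft :
  e a.1 b.1 -> rcv e (p ++ a :: b :: q) fs -> rcv e (p ++ b :: a :: q) ft ->
  raag_eq e (sigma M (p ++ a :: b :: q) fs) (sigma M (p ++ b :: a :: q) ft).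
Proof.
move=> eab [sfs Hs] [sft Ht].
have [fp [fa [fb [fq [Efs [sp sq]]]]]] : exists fp fa fb fq,
    fs = fp ++ fa :: fb :: fq /\ size fp = size p /\ size fq = size q.
  by apply: split4; rewrite sfs size_cat.
have Eft : ft = fp ++ fb :: fa :: fq.
  apply: (@eq_from_nth _ 0).
    by rewrite sft !size_cat /= sp sq.
  move=> i Hi; rewrite -nth_sw -Efs.
  have Hi' : i < size (p ++ b :: a :: q) by rewrite -sft.
  have Hi2 : i < size (p ++ a :: b :: q) by move: Hi'; rewrite !size_cat.
  have Hsw : sw (size p) i < size (p ++ a :: b :: q).
    move: Hi2; rewrite /sw size_cat /=; case: ifP => [/eqP ->|_]; first lia.
    case: ifP => [/eqP ->|_]; lia.
  rewrite sp.
  apply: (is_min_eq _ (Ht a i Hi') (Hs a _ Hsw)) => c.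
  exact: swap_key.
subst fs ft.
rewrite !sigma_cat // !sigma_cons.
apply/raag_catl/sheq_raag.
apply: blocks => l /mem_pw -> ; apply/allP => l' /mem_pw ->.
done.
Qed.

Lemma sigma_sheq n (e : rel 'I_n) (irr : irreflexive e) (sym : symmetric e) M (s t : word n) :
  sheq e s t -> forall fs ft, rcv e s fs -> rcv e t ft ->
  raag_eq e (sigma M s fs) (sigma M t ft).
Proof.
elim=> [s'|s' t' _ IH|s' t' r _ IH1 _ IH2|p q a b eab] fs ft Hs Ht.
- have -> : fs = ft.
    case: Hs Ht => [sfs Hs] [sft Ht].
    apply: (@eq_from_nth _ 0); first by rewrite sfs sft.
    move=> i; rewrite sfs => Hi.
    have [d _] : exists d : letter n, True by move: Hi; case: (s') => // d; exists d.
    exact: (is_min_eq _ (Hs d i Hi) (Ht d i Hi)).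
  exact: re_refl.
- exact/re_sym/IH.
- have [f Hf] := rcv_exists e t'.
  exact: re_trans (IH1 _ _ Hs Hf) (IH2 _ _ Hf Ht).
- exact: sigma_swap.
Qed.
Import GRing.Theory Num.Theory.

Definition idx n M (p : letter n * nat) : nat :=
  2 * n * (M - 1 - p.2) + 2 * p.1.1 + ~~ p.1.2.

Lemma u_idx n M (a : 'I_n) (b : bool) fk :
  u n (idx M ((a, b), fk)) = (nat_of_ord a, Nexp M b fk).
Proof.
rewrite /u /idx /=.
have n0 : 0 < n by case: n a => [[]|].
have r_lt : 2 * a + ~~ b < 2 * n by have := ltn_ord a; case: b => /=; lia.
have -> : 2 * n * (M - 1 - fk) + 2 * a + ~~ b = (M - 1 - fk) * (2 * n) + (2 * a + ~~ b).
  by rewrite mulnC addnA.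
rewrite divnMDl ?muln_gt0 // (divn_small r_lt) addn0 modnMDl (modn_small r_lt).
have -> : (2 * a + ~~ b) %/ 2 = a by move: r_lt; case: (b) => /=; lia.
have -> : 2 * (M - 1 - fk) + (2 * a + ~~ b) - 2 * a = 2 * (M - 1 - fk) + ~~ b by lia.
rewrite exprD exprM /Nexp sqrrN.
have -> : ((2 : int) ^+ 2)%R = 4%R by [].
by case: (b) => /=; rewrite ?expr0 ?expr1 mulrC.
Qed.

Lemma part2 n (e : rel 'I_n) M (s : word n) f :
  (size s <= M)%N -> canonical e s f ->
  exists js : seq nat, sorted ltn js /\ [seq u n j | j <- js] = sylls M s f.
Proof.
move=> sM [[sf Hr] [HA HB]].
exists [seq idx M p | p <- zip s f]; split; last first.
  rewrite /sylls -map_comp; apply: eq_map => [[[a b] fk]] /=.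
  exact: u_idx.
apply/(sortedP 0) => i; rewrite size_map size_zip sf minnn => Hi.
have [x0 _] : exists x0 : letter n, True by move: Hi; case: (s) => // x0; exists x0.
rewrite !(nth_map (x0, 0)) ?size_zip ?sf ?minnn //; last lia.
rewrite !nth_zip //= /idx /=.
have HAi : nth 0 f i.+1 <= nth 0 f i by apply: HA; lia.
have Hb : nth 0 f i <= size s - i.+1.
  by apply: (rcv_bound x0 (conj sf Hr)); lia.
have ltn_a := ltn_ord (nth x0 s i).1.
have ltn_b := ltn_ord (nth x0 s i.+1).1.
case: (ltnP (nth 0 f i.+1) (nth 0 f i)) => H.
  have K : 2 * n * (M - 1 - nth 0 f i) + 2 * n <= 2 * n * (M - 1 - nth 0 f i.+1).
    rewrite -mulnSr leq_mul2l; apply/orP; right; lia.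
  case: (nth x0 s i).2; case: (nth x0 s i.+1).2 => /=; lia.
have E : nth 0 f i.+1 = nth 0 f i by lia.
have [lt_a _] := HB x0 i i.+1 ltac:(lia) (esym E).
rewrite E; case: (nth x0 s i).2; case: (nth x0 s i.+1).2 => /=; lia.
Qed.

Theorem lemma3p3 (n : nat) (e : rel 'I_n) (M : nat) :
  (0 < n)%N -> irreflexive e -> symmetric e -> (0 < M)%N ->
  (* (1) sigma is well defined on B(M) *)
  ((forall s : word n, geodesic e s -> (size s <= M)%N -> exists f, rcv e s f) /\
   (forall (s t : word n) (fs ft : seq nat),
      geodesic e s -> (size s <= M)%N ->
      raag_eq e s t -> size t = size s ->
      rcv e s fs -> rcv e t ft ->
      raag_eq e (sigma M s fs) (sigma M t ft))) /\
  (* (2) for a canonical expression, the syllables of sigma(w) form a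
     subsequence of (u_i) *)
  (forall (s : word n) (f : seq nat),
      geodesic e s -> (size s <= M)%N -> canonical e s f ->
      exists js : seq nat,
        sorted ltn js /\ [seq u n j | j <- js] = sylls M s f).
Proof.
move=> n0 irr sym M0; split; [split|].
- by move=> s _ _; apply: rcv_exists.
- move=> s t fs ft Gs _ R st Hs Ht.
  have Gt : geodesic e t.
    move=> t' R'; rewrite st; apply: Gs; exact: re_trans R R'.
  apply: sigma_sheq => //; exact: shuffle.
- by move=> s f _; apply: part2.
Qed.
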